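(* For every integer $d\ge 2$ and every $\theta>0$, in the snowdrift game described in the context, $F$ is strictly decreasing in $\sigma_c^2$, strictly decreasing in $\sigma_b^2$, and strictly increasing in $\sigma_{bc}$ (each time with the remaining parameters held fixed).
   Context: For integers $0\le k\le n$ and $\theta>0$ let $\psi_n^k=\frac{\prod_{i=1}^{k}(\theta+i-1)\prod_{j=1}^{n-k}(\theta+j-1)}{\prod_{l=1}^{n}(2\theta+l-1)}$ (empty products equal $1$). For real arrays $\mu_{C,k},\mu_{D,k},\sigma_{CC,kl},\sigma_{CD,kl},\sigma_{DD,kl}$ ($k,l=0,\ldots,d-1$) define $$F=\sum_{k=0}^{d-1}\binom{d-1}{k}\psi_{d+1}^{k+1}(\mu_{C,k}-\mu_{D,k})+\sum_{k,l=0}^{d-1}\binom{d-1}{k}\binom{d-1}{l}\Big[-\psi_{2d+1}^{k+l+2}(\sigma_{CC,kl}-\sigma_{CD,kl})+\psi_{2d+1}^{k+l+1}(\sigma_{DD,kl}-\sigma_{CD,kl})\Big].$$ These arrays are the scaled means and second moments of the payoffs $a_k$ (cooperator) and $b_k$ (defector) with $k$ cooperating partners in a group of size $d$. In the paper's large-population weak-selection approximation, the average abundance of $C$ is $\tfrac12+\tfrac{\delta(1-u)}{u}F$; increasing $F$ means increasing the average abundance of $C$. Snowdrift game: random benefit $b$ and cost $c$ have scaled moments $\mu_b,\mu_c,\sigma_b^2,\sigma_c^2,\sigma_{bc}$ (i.e. $E[b]=\mu_b\delta+o(\delta)$, etc., with $E[bc]=\sigma_{bc}\delta+o(\delta)$).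 The payoffs are $a_k=b-\frac{c}{k+1}$ for $k=0,\ldots,d-1$, $b_0=0$, and $b_k=b$ for $k\ge1$. Hence $\mu_{C,k}=\mu_b-\frac{\mu_c}{k+1}$, $\mu_{D,k}=\mu_b\mathbf 1_{\{k\ne0\}}$, $\sigma_{CC,kl}=\sigma_b^2-\big(\frac1{k+1}+\frac1{l+1}\big)\sigma_{bc}+\frac{\sigma_c^2}{(k+1)(l+1)}$, $\sigma_{DD,kl}=\sigma_b^2\mathbf 1_{\{k\ne0,\,l\ne0\}}$, $\sigma_{CD,kl}=\big(\sigma_b^2-\frac{\sigma_{bc}}{k+1}\big)\mathbf 1_{\{l\ne0\}}$. *)

(* Defs.v *)
From mathcomp Require Import all_boot all_order all_algebra.
Set Implicit Arguments. Unset Strict Implicit. Unset Printing Implicit Defensive.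
Import Order.TTheory GRing.Theory Num.Theory.
Local Open Scope ring_scope.

Definition psi {R : realFieldType} (th : R) (n k : nat) : R :=
  (\prod_(1 <= i < k.+1) (th + i%:R - 1)) *
  (\prod_(1 <= j < (n - k).+1) (th + j%:R - 1)) /
  (\prod_(1 <= l < n.+1) (2 * th + l%:R - 1)).

Definition Fgen {R : realFieldType} (th : R) (d : nat)
  (muC muD : nat -> R) (sCC sCD sDD : nat -> nat -> R) : R :=
  \sum_(0 <= k < d) 'C(d.-1, k)%:R * psi th d.+1 k.+1 * (muC k - muD k)
  + \sum_(0 <= k < d) \sum_(0 <= l < d) 'C(d.-1, k)%:R * 'C(d.-1, l)%:R *
      (- psi th (2 * d).+1 (k + l + 2) * (sCC k l - sCD k l)
       + psi th (2 * d).+1 (k + l + 1) * (sDD k l - sCD k l)).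

Definition sd_muC {R : realFieldType} (mub muc : R) (k : nat) : R :=
  mub - muc / (k.+1)%:R.
Definition sd_muD {R : realFieldType} (mub : R) (k : nat) : R :=
  if k != 0%N then mub else 0.
Definition sd_sCC {R : realFieldType} (sb2 sc2 sbc : R) (k l : nat) : R :=
  sb2 - ((k.+1)%:R^-1 + (l.+1)%:R^-1) * sbc + sc2 / ((k.+1)%:R * (l.+1)%:R).
Definition sd_sDD {R : realFieldType} (sb2 : R) (k l : nat) : R :=
  if (k != 0%N) && (l != 0%N) then sb2 else 0.
Definition sd_sCD {R : realFieldType} (sb2 sbc : R) (k l : nat) : R :=
  if l != 0%N then sb2 - sbc / (k.+1)%:R else 0.

Definition F_snowdrift {R : realFieldType} (th : R) (d : nat)
  (mub muc sb2 sc2 sbc : R) : R :=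
  Fgen th d (sd_muC mub muc) (sd_muD mub)
    (sd_sCC sb2 sc2 sbc) (sd_sCD sb2 sbc) (sd_sDD sb2).

(* Main.v *)
Require Import Defs.
From mathcomp Require Import all_boot all_order all_algebra.
From mathcomp Require Import ring lra.
Import Order.TTheory GRing.Theory Num.Theory.
Local Open Scope ring_scope.

Lemma psi_gt0 (R : realFieldType) (th : R) n k : 0 < th -> 0 < psi th n k.
Proof.
move=> th0; rewrite /psi.
have P : forall (c : R) m, 0 < c -> 0 < \prod_(1 <= i < m) (c + i%:R - 1).
  move=> c m c0; rewrite big_seq; apply: prodr_gt0 => i.
  rewrite mem_index_iota => /andP [i1 _].
  have : (1%:R : R) <= i%:R by rewrite ler_nat.
  lra.
apply: divr_gt0; first apply: mulr_gt0; apply: P => //.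
lra.
Qed.

Lemma sum2_lt (R : realFieldType) (d : nat) (f g : nat -> nat -> R) :
  (0 < d)%N -> (forall k l, f k l <= g k l) -> f 0%N 0%N < g 0%N 0%N ->
  \sum_(0 <= k < d) \sum_(0 <= l < d) f k l <
  \sum_(0 <= k < d) \sum_(0 <= l < d) g k l.
Proof.
move=> d0 le lt.
rewrite big_ltn // [X in _ < X]big_ltn //.
apply: ltr_leD; last by apply: ler_sum_nat => k _; apply: ler_sum_nat.
rewrite big_ltn // [X in _ < X]big_ltn //.
by apply: ltr_leD; last by apply: ler_sum_nat.
Qed.

Ltac gen_inv := repeat (match goal with |- context [ GRing.inv ?t ] =>
  have : 0 < GRing.inv t by rewrite invr_gt0 ltr0n end;
  move: (GRing.inv _) => ? ?).

Ltac gen_psi th0 := repeat match goal with |- context [ psi ?th ?n ?m ] =>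
  let a := fresh "p" in let ha := fresh "hp" in
  have ha := psi_gt0 _ th n m th0;
  move: ha; move: (psi th n m) => a ha end.

Ltac sat := repeat match goal with
 | H : is_true (Order.lt 0 ?u), K : is_true (Order.lt 0 ?v) |- _ =>
   is_var u; lazymatch v with context [ _ - _ ] => idtac end;
   lazymatch v with context [u] => fail | _ => idtac end;
   lazymatch goal with _ : is_true (Order.lt 0 (u * v)) |- _ => fail | _ => have := mulr_gt0 H K; move=> ? end end.

Theorem mainTheorem6 (R : realFieldType) (d : nat) (th : R) :
  (2 <= d)%N -> 0 < th ->
  (* strictly decreasing in sigma_c^2 *)
  (forall mub muc sb2 sbc x y : R, x < y ->
     F_snowdrift th d mub muc sb2 y sbc < F_snowdrift th d mub muc sb2 x sbc) /\
  (* strictly decreasing in sigma_b^2 *)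
  (forall mub muc sc2 sbc x y : R, x < y ->
     F_snowdrift th d mub muc y sc2 sbc < F_snowdrift th d mub muc x sc2 sbc) /\
  (* strictly increasing in sigma_bc *)
  (forall mub muc sb2 sc2 x y : R, x < y ->
     F_snowdrift th d mub muc sb2 sc2 x < F_snowdrift th d mub muc sb2 sc2 y).
Proof.
move=> d2 th0.
have d0 : (0 < d)%N by apply: leq_trans d2.
split; last split; move=> mub muc s1 s2 x y xy;
  rewrite /F_snowdrift /Fgen ltrD2l; apply: sum2_lt => // [k l|];
  rewrite ?bin0 ?mul1r;
  try (apply: ler_wpM2l; first by apply: mulr_ge0; apply: ler0n);
  rewrite /sd_sCC /sd_sCD /sd_sDD;
  try (case: k => [|k]; case: l => [|l]); rewrite /=;
  gen_psi th0;
  rewrite ?invr1 ?divr1 ?mul1r ?mulr1 ?invfM ?mul1r ?mulr1; gen_inv; have hxy : 0 < y - x by lra.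
all: clear th0 d0 d2 xy; sat; lra.
Qed.
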